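(* Let $\alpha\in(0,\pi/2)$ and let $\mathbf X=(X_0,\dots,X_n)$ be a good input whose requests span the interval $[-1,r]$ of the $x$-axis, $0\le r\le 1$. Then the cost of the optimal offline algorithm is $$\mathrm{OPT}(\mathbf X;\alpha)=\begin{cases}\frac12\sqrt{(1+r)^2\cot^2\alpha+(1-r)^2} & \text{if } \alpha\le\pi/4 \text{ or } r\ge\frac{\tan^2\alpha-1}{1+\tan^2\alpha},\\ \cos\alpha & \text{otherwise.}\end{cases}$$
   Context: A drone with half angle-of-view $\alpha\in(0,\pi/2)$ at a point $(t_x,t_y)$, $t_y\ge0$, covers $[t_x-t_y\tan\alpha,t_x+t_y\tan\alpha]$ on the $x$-axis. An input is a sequence $X_0=(0,0),X_1,\dots,X_n$ ($n\ge1$) of points on the $x$-axis, $X_i=(x_i,0)$. A solution is a sequence of positions $P_0=(0,0),P_1,\dots,P_n$ in the closed upper half-plane such that $P_i$ covers $X_0,\dots,X_i$; its cost is $\sum_i|P_iP_{i+1}|$. $\mathrm{OPT}(\mathbf X;\alpha)$ is the minimum cost of a solution (input known in advance). A request $X_{i+1}$ is redundant if $x_{i+1}\in[\min_{j\le i}x_j,\max_{j\le i}x_j]$. An input is good if it has no redundant requests, $\min_j x_j=-1$ and $\max_j x_j\in[0,1]$. *)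

(* Defs.v *)
From Stdlib Require Import Reals Lra.
Open Scope R_scope.

Definition point := (R * R)%type.

Definition dist (P Q : point) : R :=
  sqrt ((fst P - fst Q)^2 + (snd P - snd Q)^2).

(* A drone with half angle-of-view alpha at P = (t_x, t_y), t_y >= 0, covers
   [t_x - t_y tan alpha, t_x + t_y tan alpha] on the x-axis. *)
Definition covers (alpha : R) (P : point) (x : R) : Prop :=
  fst P - snd P * tan alpha <= x <= fst P + snd P * tan alpha.

(* An input: n >= 1 and x : nat -> R with x 0 = 0; request X_i = (x i, 0),
   for i = 0..n (values of x beyond n are irrelevant). *)
Definition is_input (n : nat) (x : nat -> R) : Prop :=
  (1 <= n)%nat /\ x 0%nat = 0.

Definition is_solution (alpha : R) (n : nat) (x : nat -> R) (P : nat -> point) : Prop :=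
  P 0%nat = (0, 0) /\
  (forall i, (i <= n)%nat -> 0 <= snd (P i)) /\
  (forall i j, (j <= i <= n)%nat -> covers alpha (P i) (x j)).

Fixpoint cost (P : nat -> point) (n : nat) : R :=
  match n with
  | O => 0
  | S m => cost P m + dist (P m) (P (S m))
  end.

Definition OPT_is (alpha : R) (n : nat) (x : nat -> R) (v : R) : Prop :=
  (exists P, is_solution alpha n x P /\ cost P n = v) /\
  (forall P, is_solution alpha n x P -> v <= cost P n).

Definition redundant (x : nat -> R) (i : nat) : Prop :=
  (exists j, (j <= i)%nat /\ x j <= x (S i)) /\
  (exists j, (j <= i)%nat /\ x (S i) <= x j).

Definition is_min_req (n : nat) (x : nat -> R) (m : R) : Prop :=
  (exists j, (j <= n)%nat /\ x j = m) /\ (forall j, (j <= n)%nat -> m <= x j).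
Definition is_max_req (n : nat) (x : nat -> R) (M : R) : Prop :=
  (exists j, (j <= n)%nat /\ x j = M) /\ (forall j, (j <= n)%nat -> x j <= M).

Definition good_input_span (n : nat) (x : nat -> R) (r : R) : Prop :=
  is_input n x /\
  (forall i, (i < n)%nat -> ~ redundant x i) /\
  is_min_req n x (-1) /\ is_max_req n x r /\ 0 <= r <= 1.

(* Main.v *)
Require Import Defs.
From Stdlib Require Import Reals Lra Psatz.
From Stdlib Require Rgeom.
Open Scope R_scope.

Lemma dist_tri (A B C : point) : Defs.dist A B <= Defs.dist A C + Defs.dist C B.
Proof.
  destruct A as [a1 a2], B as [b1 b2], C as [c1 c2].
  pose proof (Rgeom.triangle a1 a2 b1 b2 c1 c2) as H.
  unfold Rgeom.dist_euc, Rsqr in H. unfold Defs.dist; cbn [fst snd].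
  replace ((a1 - b1)^2 + (a2-b2)^2) with ((a1 - b1) * (a1 - b1) + (a2 - b2) * (a2 - b2)) by ring.
  replace ((a1 - c1)^2 + (a2-c2)^2) with ((a1 - c1) * (a1 - c1) + (a2 - c2) * (a2 - c2)) by ring.
  replace ((c1 - b1)^2 + (c2-b2)^2) with ((c1 - b1) * (c1 - b1) + (c2 - b2) * (c2 - b2)) by ring.
  exact H.
Qed.

Lemma dist_refl (A : point) : Defs.dist A A = 0.
Proof. destruct A; unfold Defs.dist; cbn [fst snd]. replace ((r - r) ^ 2 + (r0 - r0) ^ 2) with 0 by ring. apply sqrt_0. Qed.

Lemma cost_ge (P : nat -> point) n : Defs.dist (P 0%nat) (P n) <= cost P n.
Proof.
  induction n; simpl.
  - rewrite dist_refl; lra.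
  - pose proof (dist_tri (P 0%nat) (P (S n)) (P n)). lra.
Qed.

Lemma cost_const (P : nat -> point) Q :
  (forall i, (1 <= i)%nat -> P i = Q) ->
  forall n, (1 <= n)%nat -> cost P n = Defs.dist (P 0%nat) Q.
Proof.
  intros HP n Hn. induction n as [|n IH]; [lia|].
  simpl. destruct n as [|n].
  - simpl. rewrite (HP 1%nat) by lia. ring.
  - rewrite IH by lia. rewrite (HP (S n)) by lia. rewrite (HP (S (S n))) by lia.
    rewrite dist_refl; ring.
Qed.

Lemma opt_gen alpha n x r V (Q : point) :
  good_input_span n x r -> 0 < tan alpha ->
  fst Q - snd Q * tan alpha <= -1 -> r <= fst Q + snd Q * tan alpha -> 0 <= snd Q ->
  sqrt (fst Q ^ 2 + snd Q ^ 2) = V ->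
  (forall u v, u - v * tan alpha <= -1 -> r <= u + v * tan alpha -> 0 <= v ->
     V <= sqrt (u^2 + v^2)) ->
  OPT_is alpha n x V.
Proof.
  intros [[Hn Hx0] [_ [[[jm [Hjm Hxm]] Hm] [[[jM [HjM HxM]] HM] Hr]]]] HT H1 H2 H3 HV Hlow.
  split.
  - exists (fun i => match i with O => (0,0) | S _ => Q end). split.
    + split; [reflexivity|]. split.
      * intros [|i] _; simpl; lra.
      * intros i j Hij. unfold covers. destruct i as [|i]; simpl.
        -- assert (j = 0%nat) by lia. subst. rewrite Hx0. lra.
        -- pose proof (Hm j ltac:(lia)). pose proof (HM j ltac:(lia)). lra.
    + rewrite (cost_const _ Q); [| intros [|i] Hi; [lia|reflexivity] | exact Hn].
      rewrite <- HV. unfold Defs.dist. cbn [fst snd]. f_equal. ring.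
  - intros P [HP0 [Hpos Hcov]].
    pose proof (cost_ge P n) as Hc. rewrite HP0 in Hc.
    pose proof (Hcov n jm ltac:(lia)) as Ca. pose proof (Hcov n jM ltac:(lia)) as Cb.
    unfold covers in Ca, Cb. rewrite Hxm in Ca. rewrite HxM in Cb.
    pose proof (Hpos n ltac:(lia)) as Hp.
    destruct (P n) as [u v]. simpl in *.
    assert (V <= sqrt (u^2 + v^2)) by (apply Hlow; lra).
    unfold Defs.dist in Hc. cbn [fst snd] in Hc.
    replace ((0 - u) ^ 2 + (0 - v) ^ 2) with (u^2+v^2) in Hc by ring. lra.
Qed.

Theorem lemma2 (alpha : R) (n : nat) (x : nat -> R) (r : R) :
  0 < alpha < PI / 2 ->
  good_input_span n x r ->
  OPT_is alpha n x
    (if Rle_dec alpha (PI / 4) then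
       / 2 * sqrt ((1 + r)^2 * (/ tan alpha)^2 + (1 - r)^2)
     else if Rle_dec ((tan alpha ^ 2 - 1) / (1 + tan alpha ^ 2)) r then
       / 2 * sqrt ((1 + r)^2 * (/ tan alpha)^2 + (1 - r)^2)
     else cos alpha).
Proof.
  intros Ha Hg.
  assert (HT : 0 < tan alpha) by (apply tan_gt_0; lra).
  assert (Hr : 0 <= r <= 1) by (destruct Hg as [_ [_ [_ [_ H]]]]; exact H).
  set (T := tan alpha) in *.
  assert (Hcos : 0 < cos alpha) by (apply cos_gt_0; lra).
  pose proof (Rtrigo_facts.cos_tan alpha Hcos) as Hc. fold T in Hc.
  unfold Rsqr in Hc.
  assert (apex : (T ^ 2 - 1) / (1 + T ^ 2) <= r ->
     OPT_is alpha n x (/ 2 * sqrt ((1 + r)^2 * (/ T)^2 + (1 - r)^2))).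
  { intros Hth.
    assert (Hth' : T^2 * (1 - r) <= 1 + r).
    { apply Rmult_le_compat_r with (r := 1 + T^2) in Hth; [|nra].
      unfold Rdiv in Hth. rewrite Rmult_assoc, Rinv_l in Hth by nra. nra. }
    apply (opt_gen alpha n x r _ ((r - 1)/2, (1 + r) / (2 * T)) Hg HT); cbn [fst snd]; fold T.
    - replace ((r - 1) / 2 - (1 + r) / (2 * T) * T) with (-1) by (field; lra). lra.
    - replace ((r - 1) / 2 + (1 + r) / (2 * T) * T) with r by (field; lra). lra.
    - apply Rlt_le, Rdiv_lt_0_compat; lra.
    - rewrite <- (sqrt_pow2 (/2)) by lra. rewrite <- sqrt_mult by (try lra; nra).
      f_equal. field. lra.
    - intros u v Hu1 Hu2 Hv.
      rewrite <- (sqrt_pow2 (/2)) by lra. rewrite <- sqrt_mult by (try lra; nra).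
      apply sqrt_le_1_alt.
      assert (Hk : 4 * T^2 * (u^2 + v^2) >= (1+r)^2 + T^2 * (1-r)^2).
      { clearbody T. assert (0 <= (v * T - 1 - u) * ((1+r) + T^2*(1-r))) by (apply Rmult_le_pos; nra).
        assert (0 <= (u + v * T - r) * ((1+r) - T^2*(1-r))) by (apply Rmult_le_pos; nra).
        assert (0 <= (2*T*u - T*(r-1))^2) by apply pow2_ge_0.
        assert (0 <= (2*T*v - (1+r))^2) by apply pow2_ge_0.
        lra. }
      replace ((/ 2) ^ 2 * ((1 + r) ^ 2 * (/ T) ^ 2 + (1 - r) ^ 2))
        with (((1+r)^2 + T^2 * (1-r)^2) / (4 * T^2)) by (field; lra).
      apply Rmult_le_reg_r with (r := 4 * T^2); [nra|].
      unfold Rdiv. rewrite Rmult_assoc, Rinv_l by nra. lra. }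
  destruct (Rle_dec alpha (PI / 4)) as [Hle|Hgt].
  - apply apex.
    assert (T <= 1) by (rewrite <- tan_PI4; apply tan_incr_1; lra).
    apply Rle_trans with 0; [|lra].
    assert (0 < /(1+T^2)) by (apply Rinv_0_lt_compat; nra). unfold Rdiv. clearbody T. assert (0 <= (1 - T^2) * /(1+T^2)) by (apply Rmult_le_pos; nra). lra.
  - destruct (Rle_dec ((T ^ 2 - 1) / (1 + T ^ 2)) r) as [Hth|Hth].
    + apply apex; exact Hth.
    + assert (Hth' : r < (T^2 - 1) / (1 + T^2)) by lra.
      assert (HS : 0 < 1 + T^2) by nra.
      apply (opt_gen alpha n x r _ (-1/(1+T^2), T/(1+T^2)) Hg HT); cbn [fst snd]; fold T.
      * replace (-1 / (1 + T ^ 2) - T / (1 + T ^ 2) * T) with (-1) by (field; lra). lra.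
      * replace (-1 / (1 + T ^ 2) + T / (1 + T ^ 2) * T) with ((T^2 - 1)/(1+T^2)) by (field; lra). lra.
      * apply Rlt_le, Rdiv_lt_0_compat; lra.
      * rewrite Hc. replace (1 + T*T) with (1 + T^2) by ring.
        replace ((-1 / (1 + T ^ 2)) ^ 2 + (T / (1 + T ^ 2)) ^ 2) with (/ (1 + T^2)) by (field; lra).
        rewrite sqrt_inv. field. apply Rgt_not_eq, sqrt_lt_R0. lra.
      * intros u v Hu1 Hu2 Hv. rewrite Hc. replace (1 + T*T) with (1 + T^2) by ring.
        assert (Hs : 0 < sqrt (1 + T^2)) by (apply sqrt_lt_R0; lra).
        replace (1 / sqrt (1+T^2)) with (sqrt (/ (1+T^2))) by (rewrite sqrt_inv; field; lra).
        apply sqrt_le_1_alt.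
        apply Rmult_le_reg_r with (r := 1 + T^2); [lra|].
        rewrite Rinv_l by lra.
        clearbody T. assert (0 <= (u*T + v)^2) by apply pow2_ge_0. assert (0 <= (v*T-u-1)*(v*T-u+1)) by (apply Rmult_le_pos; lra). nra.
Qed.
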